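(* For every information structure $\mathbf q$ (with $\mathbb E[\mathbf q]=p_0$), the following three conditions are equivalent: (i) $\mathrm{VoI}_A(\mathbf q)=0$; (ii) there exists $a^\star\in A^\star(p_0)$ such that $a^\star\in A^\star(\mathbf q)$ $\mathbb P$-almost surely; (iii) $\mathbf q\in \Delta^{c}_A(p_0)$ $\mathbb P$-almost surely.
   Context: Let $K$ be a finite set of states of nature. Signed measures on $K$ are identified with $\mathbb R^K$, with scalar product $\langle s,v\rangle=\sum_{k\in K}s_kv_k$ and Euclidean norm $\|\cdot\|$. Let $\Delta\subset\mathbb R^K$ be the simplex of probability distributions on $K$, and fix a prior $p_0\in\Delta$ with full support. The action set $A\subset\mathbb R^K$ is the closed convex hull $\overline{\mathrm{co}}\{(g(d,k))_{k\in K}: d\in D\}$ for a compact set $D$ and a continuous $g:D\times K\to\mathbb R$; in particular $A$ is a nonempty compact convex subset of $\mathbb R^K$. The value function is $v_A(p)=\max_{a\in A}\langle p,a\rangle$ for $p\in\Delta$. For $p\in\Delta$, the set of optimal actions is $A^\star(p)=\{a\in A:\langle p,a'\rangle\le\langle p,a\rangle\ \forall a'\in A\}$. For $a\in A$, the set of beliefs revealed by $a$ is $\Delta^\star_A(a)=\{p\in\Delta:\langle p,a'\rangle\le\langle p,a\rangle\ \forall a'\in A\}$. The confidence set of $p_0$ is $\Delta^c_A(p_0)=\bigcap_{a\in A^\star(p_0)}\Delta^\star_A(a)$. An information structure is a random variable $\mathbf q$ defined on a probability space $(\Omega,\mathcal F,\mathbb P)$ with values in $\Delta$ such that $\mathbb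 E[\mathbf q]=p_0$. The value of information is $\mathrm{VoI}_A(\mathbf q)=\mathbb E[v_A(\mathbf q)]-v_A(p_0)$. *)

(* Defs.v *)
From HB Require Import structures.
From mathcomp Require Import all_boot all_order all_algebra.
From mathcomp Require Import all_classical all_reals all_analysis.
Set Implicit Arguments. Unset Strict Implicit. Unset Printing Implicit Defensive.
Import Order.TTheory GRing.Theory Num.Theory.
Local Open Scope classical_set_scope.
Local Open Scope ring_scope.

Section Defs.
Variables (R : realType) (K : finType).

(* signed measures on K identified with R^K = K -> R *)
Definition dotp (s v : K -> R) : R := \sum_(k : K) s k * v k.

Definition eucl_norm (v : K -> R) : R := Num.sqrt (\sum_(k : K) v k ^+ 2).

Definition simplex : set (K -> R) :=
  [set p | (forall k, 0 <= p k) /\ \sum_(k : K) p k = 1].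

Definition conv_hull (S : set (K -> R)) : set (K -> R) :=
  [set x | exists (n : nat) (w : 'I_n -> R) (s : 'I_n -> (K -> R)),
      (forall i, 0 <= w i) /\ \sum_(i < n) w i = 1 /\ (forall i, S (s i)) /\
      x = (fun k => \sum_(i < n) w i * s i k)].

Definition eucl_closure (S : set (K -> R)) : set (K -> R) :=
  [set x | forall e : R, 0 < e ->
      exists2 y, S y & eucl_norm (fun k => x k - y k) < e].

Definition action_set (D : Type) (g : D -> K -> R) : set (K -> R) :=
  eucl_closure (conv_hull (range g)).

(* value function v_A(p) = max_{a in A} <p,a> (max = sup, A compact) *)
Definition vA (A : set (K -> R)) (p : K -> R) : R :=
  sup [set dotp p a | a in A].

Definition Astar (A : set (K -> R)) (p : K -> R) : set (K -> R) :=
  [set a | A a /\ forall a', A a' -> dotp p a' <= dotp p a].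

Definition Deltastar (A : set (K -> R)) (a : K -> R) : set (K -> R) :=
  [set p | simplex p /\ forall a', A a' -> dotp p a' <= dotp p a].

Definition Delta_c (A : set (K -> R)) (p0 : K -> R) : set (K -> R) :=
  [set p | forall a, Astar A p0 a -> Deltastar A a p].

Definition VoI (d : measure_display) (Omega : measurableType d)
  (P : probability Omega R) (A : set (K -> R)) (p0 : K -> R)
  (q : Omega -> K -> R) : \bar R :=
  (\int[P]_w (vA A (q w))%:E - (vA A p0)%:E)%E.
End Defs.

(* Main.v *)
Require Import Defs.
From HB Require Import structures.
From mathcomp Require Import all_boot all_order all_algebra.
From mathcomp Require Import all_classical all_reals all_analysis.
From mathcomp Require Import measurable_realfun.
From mathcomp Require Import lra.
Import Order.TTheory GRing.Theory Num.Theory numFieldNormedType.Exports.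
Local Open Scope classical_set_scope.
Local Open Scope ring_scope.
Set Implicit Arguments. Unset Strict Implicit. Unset Printing Implicit Defensive.
Section Basic.
Variables (R : realType) (K : finType).

Lemma abs_le_norm (v : K -> R) k : `|v k| <= eucl_norm v.
Proof.
rewrite /eucl_norm -sqrtr_sqr ler_sqrt; last by apply: sumr_ge0 => i _; exact: sqr_ge0.
by rewrite (bigD1 k) //= lerDl; apply: sumr_ge0 => i _; exact: sqr_ge0.
Qed.

Lemma dotp_diff (p x y : K -> R) : dotp p x - dotp p y = dotp p (fun k => x k - y k).
Proof. by rewrite /dotp -sumrB; apply: eq_bigr => k _; rewrite mulrBr. Qed.

Lemma dotp_close (p x y : K -> R) (e : R) : simplex p ->
  (forall k, `|x k - y k| <= e) -> `|dotp p x - dotp p y| <= e.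
Proof.
move=> [p0 p1] H; rewrite dotp_diff /dotp.
apply: (le_trans (ler_norm_sum _ _ _)).
apply: (@le_trans _ _ (\sum_k p k * e)).
  apply: ler_sum => k _; rewrite normrM ger0_norm //; exact: ler_wpM2l.
by rewrite -mulr_suml p1 mul1r.
Qed.

Lemma dotp_close_le (p x y : K -> R) (e : R) : simplex p ->
  (forall k, `|x k - y k| <= e) -> dotp p x <= dotp p y + e.
Proof.
move=> sp H; have := dotp_close sp H; rewrite -lerBlDl => /(le_trans (ler_norm _)).
by rewrite lerBlDl addrC.
Qed.

Lemma le_of_eps (x y : R) : (forall e, 0 < e -> x <= y + e) -> x <= y.
Proof. by move=> H; apply/ler_addgt0Pr. Qed.

End Basic.
Section Dense.
Variables (R : realType) (K : finType).

Lemma floor_approx (x : R) (m : nat) :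
  `|x - (Num.floor (x * m.+1%:R))%:~R / m.+1%:R| < m.+1%:R^-1.
Proof.
set N : R := m.+1%:R.
have N0 : 0 < N by rewrite ltr0n.
have -> : x - (Num.floor (x * N))%:~R / N = (x * N - (Num.floor (x * N))%:~R) / N.
  by rewrite mulrBl mulfK // gt_eqF.
rewrite normrM [`|N^-1|]gtr0_norm ?invr_gt0 // -[X in _ < X]mul1r ltr_pM2r ?invr_gt0 //.
rewrite ger0_norm; last by rewrite subr_ge0 floor_le.
by rewrite ltrBlDl; have := floorD1_gt (x * N); rewrite intrD.
Qed.

Lemma dense_seq (S : set (K -> R)) : S !=set0 -> exists c : nat -> K -> R,
  (forall n, S (c n)) /\
  (forall a, S a -> forall e, 0 < e -> exists n, forall k, `|a k - c n k| < e).
Proof.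
move=> [a0 Sa0].
pose good (i : ({ffun K -> int} * nat)%type) (b : K -> R) := S b /\
  forall k, `|b k - (i.1 k)%:~R / (i.2.+1)%:R| < (i.2.+1)%:R^-1.
pose pck i : K -> R := match pselect (exists b, good i b) with
  | left H => proj1_sig (cid H) | right _ => a0 end.
have pckP i : (exists b, good i b) -> good i (pck i).
  by rewrite /pck; case: pselect => // H _; exact: (proj2_sig (cid H)).
pose c n := match @unpickle ({ffun K -> int} * nat)%type n with
  Some i => pck i | None => a0 end.
exists c; split.
  move=> n; rewrite /c; case: unpickle => [i|] //; rewrite /pck.
  by case: pselect => [H|] //; exact: (proj2_sig (cid H)).1.
move=> a Sa e e0.
pose m := Num.truncn (2 / e).
pose i := ([ffun k => Num.floor (a k * m.+1%:R)], m).
exists (pickle i); rewrite /c pickleK.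
have /pckP [_ Hb] : exists b, good i b.
  exists a; split => // k; rewrite /i /= ffunE; exact: floor_approx.
move=> k; have := Hb k; rewrite /i /= ffunE => h1.
have h2 := floor_approx (a k) m.
have N0 : 0 < (m.+1%:R : R) by rewrite ltr0n.
have he : 2 / m.+1%:R < e.
  rewrite ltr_pdivrMr // mulrC -ltr_pdivrMr //; exact: truncnS_gt.
apply: le_lt_trans he.
rewrite -[X in _ <= X / _]/(1 + 1) mulrDl mul1r.
set z := _ / _ in h1 h2.
have -> : a k - pck i k = (a k - z) - (pck i k - z) by rewrite opprB addrA subrK.
apply: (le_trans (ler_normB _ _)).
by rewrite lerD // ltW.
Qed.
End Dense.
Section Act.
Variables (R : realType) (K : finType) (D : topologicalType) (g : D -> K -> R).
Hypotheses (Dc : compact [set: D]) (Dne : [set: D] !=set0)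
  (gc : forall k : K, continuous (fun d => g d k)).

Lemma cont_dot (p : K -> R) : continuous (fun d => dotp p (g d)).
Proof.
rewrite /dotp; elim: (index_enum K) => [|k s IH].
  by under eq_fun do rewrite big_nil; exact: cst_continuous.
under eq_fun do rewrite big_cons.
move=> x.
apply: (@continuousD _ _ _ (fun d => p k * g d k) (fun d => \sum_(j <- s) p j * g d j)); last exact: IH.
apply: (@continuousM _ _ (fun _ => p k) (fun d => g d k)); [exact: cst_continuous | exact: gc].
Qed.

Lemma max_dir (p : K -> R) : exists d, forall d', dotp p (g d') <= dotp p (g d).
Proof.
have [c _ H] := compact_EVT_max Dne Dc (@continuous_subspaceT _ _ setT _ (@cont_dot p)).
by exists c => d'; apply: H; rewrite inE.
Qed.

Lemma g_in_A d : action_set g (g d).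
Proof.
move=> e e0; exists (g d).
  exists 1%N, (fun _ => 1), (fun _ => g d); split; first by move=> _; exact: ler01.
  split; first by rewrite big_ord1.
  split; first by move=> _; exists d.
  by apply/funext => k; rewrite big_ord1 mul1r.
rewrite /eucl_norm (eq_bigr (fun _ => 0)); last by move=> k _; rewrite subrr expr0n.
by rewrite big1 // sqrtr0.
Qed.

Lemma A_le (p : K -> R) d : simplex p -> (forall d', dotp p (g d') <= dotp p (g d)) ->
  forall a, action_set g a -> dotp p a <= dotp p (g d).
Proof.
move=> sp Hd a Aa; apply: le_of_eps => e e0.
have [y [n [w [s [w0 [w1 [Ss ->]]]]]] hy] := Aa e e0.
apply: le_trans (dotp_close_le sp (fun k => ltW (le_lt_trans (abs_le_norm _ k) hy))) _.
rewrite lerD2r /dotp.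
under eq_bigr do rewrite mulr_sumr.
rewrite exchange_big /=.
apply: (@le_trans _ _ (\sum_(i < n) w i * dotp p (g d))).
  apply: ler_sum => i _.
  have -> : \sum_k p k * (w i * s i k) = w i * dotp p (s i).
    by rewrite /dotp mulr_sumr; apply: eq_bigr => k _; rewrite mulrCA.
  apply: ler_wpM2l; first exact: w0.
  by have [d' _ <-] := Ss i; exact: Hd.
by rewrite -mulr_suml w1 mul1r.
Qed.

Lemma vA_eq (p : K -> R) d : simplex p -> (forall d', dotp p (g d') <= dotp p (g d)) ->
  vA (action_set g) p = dotp p (g d).
Proof.
move=> sp Hd; apply/le_anti/andP; split.
  by apply: ge_sup; [exists (dotp p (g d)), (g d); first exact: g_in_A |
    move=> _ [a Aa <-]; exact: A_le].
apply: ub_le_sup; last by exists (g d); first exact: g_in_A.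
by exists (dotp p (g d)) => _ [a Aa <-]; exact: A_le.
Qed.

Lemma Astar_g (p : K -> R) d : simplex p -> (forall d', dotp p (g d') <= dotp p (g d)) ->
  Astar (action_set g) p (g d).
Proof. by move=> sp Hd; split; [exact: g_in_A | exact: A_le]. Qed.

End Act.
Section Simp.
Variables (R : realType) (K : finType).
Lemma simplex_le1 (p : K -> R) k : simplex p -> p k <= 1.
Proof.
move=> [p0 p1]; rewrite -p1 (bigD1 k) //= lerDl; apply: sumr_ge0 => i _; exact: p0.
Qed.
Lemma dotp_bnd (p x : K -> R) e : simplex p -> (forall k, `|x k| <= e) -> `|dotp p x| <= e.
Proof.
move=> sp H; have := dotp_close sp (y := fun _ => 0) (x := x) (e := e).
have -> : dotp p (fun _ => 0) = 0 by rewrite /dotp big1 // => k _; rewrite mulr0.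
by rewrite subr0; apply => k; rewrite subr0.
Qed.
Lemma abs_le_sumabs (x : K -> R) k : `|x k| <= \sum_j `|x j|.
Proof. by rewrite (bigD1 k) //= lerDl; apply: sumr_ge0. Qed.
End Simp.

Section Prob.
Variables (R : realType) (K : finType).
Variables (dOm : measure_display) (Omega : measurableType dOm)
  (P : probability Omega R) (q : Omega -> K -> R).
Hypotheses (q_meas : forall k, measurable_fun [set: Omega] (fun w => q w k))
  (q_simplex : forall w, simplex (q w)).

Lemma dq_meas (b : K -> R) : measurable_fun setT (fun w => dotp (q w) b).
Proof.
rewrite /dotp; apply: (@measurable_sum _ _ _ _ _ (index_enum K) (fun k w => q w k * b k)) => k.
exact: (measurable_funM (q_meas k) (measurable_cst (b k))).
Qed.

Lemma bnd_int (f : Omega -> R) M : measurable_fun setT f -> (forall w, `|f w| <= M) ->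
  P.-integrable setT (EFin \o f).
Proof.
move=> mf Hf; apply: (le_integrable measurableT _ _ (finite_measure_integrable_cst P M measurableT)).
- exact/measurable_EFinP.
- move=> w _ /=; rewrite lee_fin; apply: (le_trans (Hf w)).
  by rewrite ger0_norm // (le_trans _ (Hf w)).
Qed.

Lemma dq_int (b : K -> R) : P.-integrable setT (EFin \o (fun w => dotp (q w) b)).
Proof.
apply: (bnd_int (M := \sum_j `|b j|)); first exact: dq_meas.
move=> w; apply: dotp_bnd => //; exact: abs_le_sumabs.
Qed.

Variable (p0 : K -> R).
Hypothesis (q_mean : forall k, (\int[P]_w (q w k)%:E = (p0 k)%:E)%E).

Lemma q_int k : P.-integrable setT (EFin \o (fun w => q w k)).
Proof.
apply: (bnd_int (M := 1)); first exact: q_meas.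
move=> w; have [h0 _] := q_simplex w.
by rewrite ger0_norm //; exact: simplex_le1.
Qed.

Lemma dq_integral (b : K -> R) :
  (\int[P]_w (dotp (q w) b)%:E = (dotp p0 b)%:E)%E.
Proof.
transitivity (\int[P]_w (\sum_(k : K) ((b k)%:E * (q w k)%:E)))%E.
  apply: eq_integral => w _; rewrite /dotp -sumEFin.
  by apply: eq_bigr => k _; rewrite mulrC EFinM.
rewrite integral_sum //; last by move=> k; apply: integrableZl => //; exact: q_int.
rewrite /dotp -sumEFin; apply: eq_bigr => k _.
by rewrite integralZl //; [rewrite q_mean -EFinM mulrC | exact: q_int].
Qed.
End Prob.
Section Main.
Variables (R : realType) (K : finType) (D : topologicalType) (g : D -> K -> R).
Hypotheses (Dc : compact [set: D]) (Dne : [set: D] !=set0)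
  (gc : forall k : K, continuous (fun d => g d k)).
Variables (p0 : K -> R) (dOm : measure_display) (Omega : measurableType dOm)
  (P : probability Omega R) (q : Omega -> K -> R).
Hypotheses (p0s : simplex p0)
  (q_meas : forall k, measurable_fun [set: Omega] (fun w => q w k))
  (q_simplex : forall w, simplex (q w))
  (q_mean : forall k, (\int[P]_w (q w k)%:E = (p0 k)%:E)%E).
Local Notation A := (action_set g).

Lemma v_attained p : simplex p -> exists a, Astar A p a /\ vA A p = dotp p a.
Proof.
move=> sp; have [d Hd] := max_dir Dc Dne gc p.
by exists (g d); split; [exact: Astar_g | exact: vA_eq].
Qed.

Lemma vA_Astar p a : simplex p -> Astar A p a -> vA A p = dotp p a.
Proof.
move=> sp [Aa Ha]; have [a1 [[A1 H1] ->]] := v_attained sp.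
by apply/le_anti; rewrite Ha // H1.
Qed.

Lemma v_ge w a : A a -> dotp (q w) a <= vA A (q w).
Proof.
by move=> Aa; have [a1 [[A1 H1] ->]] := v_attained (q_simplex w); exact: H1.
Qed.

Lemma v_meas : measurable_fun setT (fun w => vA A (q w)).
Proof.
have [c [cA cd]] : exists c : nat -> K -> R, (forall n, A (c n)) /\
  (forall a, A a -> forall e, 0 < e -> exists n, forall k, `|a k - c n k| < e).
  by apply: dense_seq; case: Dne => d0 _; exists (g d0); exact: g_in_A.
have E : (fun w => vA A (q w)) = (fun w => sups (fun n => dotp (q w) (c n)) 0).
  apply/funext => w; have [a [[Aa Ha] ->]] := v_attained (q_simplex w).
  rewrite /sups /=; apply/le_anti/andP; split.
    apply: le_of_eps => e e0; have [n Hn] := cd a Aa e e0.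
    apply: le_trans (dotp_close_le (q_simplex w) (x:=a) (y:=c n) (fun k => ltW (Hn k))) _.
    rewrite lerD2r; apply: ub_le_sup; last by exists n.
    by exists (dotp (q w) a) => _ [m _ <-]; exact: Ha.
  apply: ge_sup; first by exists (dotp (q w) (c 0%N)), 0%N.
  by move=> _ [m _ <-]; exact: Ha.
rewrite E; apply: (measurable_fun_sups (h := fun n w => dotp (q w) (c n))).
  move=> t _; exists (vA A (q t)) => _ [m _ <-]; exact: v_ge.
by move=> m; exact: dq_meas.
Qed.


Lemma dotp_unit (x : K -> R) k : dotp (fun j => (j == k)%:R) x = x k.
Proof.
rewrite /dotp (bigD1 k) //= eqxx mul1r big1 ?addr0 // => j /negbTE ->.
by rewrite mul0r.
Qed.

Lemma dotp_Nunit (x : K -> R) k : dotp (fun j => - (j == k)%:R) x = - x k.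
Proof.
rewrite /dotp (bigD1 k) //= eqxx mulN1r big1 ?addr0 // => j /negbTE ->.
by rewrite oppr0 mul0r.
Qed.

Lemma g_bounded : exists M, forall d k, `|g d k| <= M.
Proof.
have [dM HM] := choice (fun k => max_dir Dc Dne gc (fun j => (j == k)%:R)).
have [dm Hm] := choice (fun k => max_dir Dc Dne gc (fun j => - (j == k)%:R)).
exists (\sum_k (`|g (dM k) k| + `|g (dm k) k|)) => d k.
apply: (@le_trans _ _ (`|g (dM k) k| + `|g (dm k) k|)); last first.
  by rewrite (bigD1 k) //= lerDl; apply: sumr_ge0 => j _; rewrite addr_ge0.
have h1 := HM k d; rewrite !dotp_unit in h1.
have h2 := Hm k d; rewrite !dotp_Nunit lerN2 in h2.
have n1 := ler_norm (g (dM k) k); have n2 := ler_norm (- g (dm k) k).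
rewrite normrN in n2; have n3 := normr_ge0 (g (dM k) k).
have n4 := normr_ge0 (g (dm k) k).
rewrite ler_norml; apply/andP; split; lra.
Qed.

Lemma v_int : P.-integrable setT (EFin \o (fun w => vA A (q w))).
Proof.
have [M HM] := g_bounded.
apply: (bnd_int P (M := M)); first exact: v_meas.
move=> w; have [d Hd] := max_dir Dc Dne gc (q w).
by rewrite (vA_eq (q_simplex w) Hd); apply: dotp_bnd.
Qed.

Lemma VoI_eq a : Astar A p0 a -> {ae P, forall w, Astar A (q w) a} ->
  VoI P A p0 q = 0%E.
Proof.
move=> Ha H; rewrite /VoI.
have -> : (\int[P]_w (vA A (q w))%:E = \int[P]_w (dotp (q w) a)%:E)%E.
  apply: ae_eq_integral => //.
  - by apply/measurable_EFinP; exact: v_meas.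
  - by apply/measurable_EFinP; exact: dq_meas.
  - by apply: filterS H => w Hw _; rewrite (vA_Astar (q_simplex w) Hw).
by rewrite (dq_integral q_meas q_simplex q_mean) (vA_Astar p0s Ha) -EFinB subrr.
Qed.

Lemma key a : Astar A p0 a -> VoI P A p0 q = 0%E ->
  {ae P, forall w, Astar A (q w) a}.
Proof.
move=> Ha H0.
pose f w := vA A (q w) - dotp (q w) a.
have f0 w : 0 <= f w by rewrite subr_ge0; apply: v_ge; case: Ha.
have mf : measurable_fun setT (fun w => (f w)%:E).
  by apply/measurable_EFinP; apply: measurable_funB; [exact: v_meas | exact: dq_meas].
have I0 : (\int[P]_w `|(f w)%:E| = 0)%E.
  transitivity (\int[P]_w ((vA A (q w))%:E - (dotp (q w) a)%:E))%E.
    by apply: eq_integral => w _; rewrite /= ger0_norm // EFinB.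
  rewrite integralB_EFin //; [|exact: v_int|exact: dq_int].
  by rewrite (dq_integral q_meas q_simplex q_mean) -(vA_Astar p0s Ha).
have := (ae_eq_integral_abs P measurableT mf).1 I0.
apply: filterS => w /(_ I) /= [Hf]; split; first by case: Ha.
move=> a' Aa'; apply: (le_trans (v_ge w Aa')).
by move/eqP: Hf; rewrite subr_eq0 => /eqP ->.
Qed.

End Main.
Theorem proposition3p1 (R : realType) (K : finType)
  (D : topologicalType) (g : D -> K -> R)
  (D_compact : compact [set: D]) (D_nonempty : [set: D] !=set0)
  (g_cont : forall k : K, continuous (fun d => g d k))
  (p0 : K -> R) (p0_simplex : simplex p0) (p0_full : forall k, 0 < p0 k)
  (dOm : measure_display) (Omega : measurableType dOm)
  (P : probability Omega R) (q : Omega -> K -> R)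
  (q_meas : forall k, measurable_fun [set: Omega] (fun w => q w k))
  (q_simplex : forall w, simplex (q w))
  (q_mean : forall k, (\int[P]_w (q w k)%:E = (p0 k)%:E)%E) :
  let A := action_set g in
  [<-> VoI P A p0 q = 0%E;
       exists2 astar, Astar A p0 astar &
         {ae P, forall w, Astar A (q w) astar};
       {ae P, forall w, Delta_c A p0 (q w)}].
Proof.
move=> A; rewrite /A; tfae.
- move=> H0; have [a [Ha _]] := v_attained D_compact D_nonempty g_cont p0_simplex.
  exists a => //.
  exact: (key D_compact D_nonempty g_cont p0_simplex q_meas q_simplex q_mean Ha H0).
- case=> a Ha Hae.
  have V0 := VoI_eq D_compact D_nonempty g_cont p0_simplex q_meas q_simplex q_mean Ha Hae.
  have [c [cF cd]] := dense_seq (ex_intro _ a Ha).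
  have := ae_foralln (P := fun n w => Astar (action_set g) (q w) (c n))
    (fun n => key D_compact D_nonempty g_cont p0_simplex q_meas q_simplex q_mean (cF n) V0).
  apply: filterS => w Hw b Hb; split; first exact: q_simplex.
  move=> a' Aa'; apply: le_of_eps => e e0.
  have [n Hn] := cd b Hb e e0.
  apply: le_trans ((Hw n).2 a' Aa') _.
  apply: (dotp_close_le (q_simplex w)) => k.
  by rewrite distrC; exact: ltW (Hn k).
- move=> H; have [a [Ha _]] := v_attained D_compact D_nonempty g_cont p0_simplex.
  apply: (VoI_eq D_compact D_nonempty g_cont p0_simplex q_meas q_simplex q_mean Ha).
  apply: filterS H => w Hw; have [_ Hd] := Hw a Ha.
  by split; [case: Ha | exact: Hd].
Qed.
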